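(* Let $(E,\langle\cdot,\cdot\rangle,\rho,\circ)$ be a pre-Courant algebroid over $M$ with Jacobiator $J$. Consider the complex $V_1=\Gamma(\operatorname{Ker}(\rho))\xrightarrow{\ i\ }V_0=\Gamma(E)$ with $i$ the inclusion, define $l_2(e_1,e_2)=e_1\circ e_2$ for $e_1,e_2\in\Gamma(E)$, $l_2(e,\kappa)=e\circ\kappa$ and $l_2(\kappa,e)=\kappa\circ e$ for $e\in\Gamma(E)$, $\kappa\in\Gamma(\operatorname{Ker}\rho)$, and $l_3(e_1,e_2,e_3)=J(e_1,e_2,e_3)$. Then $(V_1\xrightarrow{i}V_0,l_2,l_3)$ is a Leibniz 2-algebra.
   Context: A Courant vector bundle over a smooth manifold $M$ is a vector bundle $E\to M$ with a fibrewise nondegenerate symmetric bilinear form $\langle\cdot,\cdot\rangle$ and a bundle map $\rho:E\to TM$ such that $\rho\circ\rho^*=0$, where $\rho^*:T^*M\to E^*\cong E$ is the dual of $\rho$ followed by the identification $E^*\cong E$ via $\langle\cdot,\cdot\rangle$. A pre-Courant algebroid structure on it is an $\mathbb R$-bilinear operation $\circ$ on $\Gamma(E)$ such that for all $e_1,e_2,e_3\in\Gamma(E)$: (i) $\rho(e_1\circ e_2)=[\rho(e_1),\rho(e_2)]$; (ii) $\langle e_1\circ e_1,e_2\rangle=\frac12\rho(e_2)\langle e_1,e_1\rangle$; (iii) $\rho(e_1)\langle e_2,e_3\rangle=\langle e_1\circ e_2,e_3\rangle+\langle e_2,e_1\circ e_3\rangle$. The Jacobiator is $J(e_1,e_2,e_3)=e_1\circ(e_2\circ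 e_3)-(e_1\circ e_2)\circ e_3-e_2\circ(e_1\circ e_3)$. A Leibniz 2-algebra consists of a complex of vector spaces $V_1\xrightarrow{d}V_0$, a bilinear map $l_2:V_i\times V_j\to V_{i+j}$ for $i+j\le1$, and a trilinear map $l_3:V_0\times V_0\times V_0\to V_1$ such that for all $w,x,y,z\in V_0$, $m,n\in V_1$: (a1) $d\,l_2(x,m)=l_2(x,dm)$; (a2) $d\,l_2(m,x)=l_2(dm,x)$; (a3) $l_2(dm,n)=l_2(m,dn)$; (b1) $d\,l_3(x,y,z)=l_2(x,l_2(y,z))-l_2(l_2(x,y),z)-l_2(y,l_2(x,z))$; (b2) $l_3(x,y,dm)=l_2(x,l_2(y,m))-l_2(l_2(x,y),m)-l_2(y,l_2(x,m))$; (b3) $l_3(x,dm,y)=l_2(x,l_2(m,y))-l_2(l_2(x,m),y)-l_2(m,l_2(x,y))$; (b4) $l_3(dm,x,y)=l_2(m,l_2(x,y))-l_2(l_2(m,x),y)-l_2(x,l_2(m,y))$; (c) $l_2(w,l_3(x,y,z))-l_2(x,l_3(w,y,z))+l_2(y,l_3(w,x,z))+l_2(l_3(w,x,y),z)-l_3(l_2(w,x),y,z)-l_3(x,l_2(w,y),z)-l_3(x,y,l_2(w,z))+l_3(w,l_2(x,y),z)+l_3(w,y,l_2(x,z))-l_3(w,x,l_2(y,z))=0$. *)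

(* Defs.v *)
From HB Require Import structures.
From mathcomp Require Import all_boot all_order all_algebra.
From mathcomp Require Import boolp classical_sets functions reals.
Set Implicit Arguments. Unset Strict Implicit. Unset Printing Implicit Defensive.
Import GRing.Theory.
Local Open Scope ring_scope.

Section Multilin.
Variable R : pzRingType.

Definition lin1 (U W : lmodType R) (f : U -> W) : Prop :=
  forall (c : R) (x y : U), f (c *: x + y) = c *: f x + f y.

Definition bilin (U1 U2 W : lmodType R) (f : U1 -> U2 -> W) : Prop :=
  (forall x, lin1 (f x)) /\ (forall y, lin1 (fun x => f x y)).

Definition trilin (U1 U2 U3 W : lmodType R) (f : U1 -> U2 -> U3 -> W) : Prop :=
  [/\ forall x y, lin1 (f x y),
      forall x z, lin1 (fun y => f x y z) &
      forall y z, lin1 (fun x => f x y z)].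
End Multilin.

(* The bilinear map l2 : V_i x V_j -> V_{i+j} (i+j <= 1) is given by   *)
(* its three components l2_00 : V0xV0->V0, l2_01 : V0xV1->V1,          *)
(* l2_10 : V1xV0->V1.                                                  *)
Section Leibniz2.
Variables (R : pzRingType) (V1 V0 : lmodType R).

Record leibniz2 (d : V1 -> V0) (l2_00 : V0 -> V0 -> V0)
    (l2_01 : V0 -> V1 -> V1) (l2_10 : V1 -> V0 -> V1)
    (l3 : V0 -> V0 -> V0 -> V1) : Prop := {
  l2_d_lin : lin1 d;
  l2_00_bilin : bilin l2_00;
  l2_01_bilin : bilin l2_01;
  l2_10_bilin : bilin l2_10;
  l3_trilin : trilin l3;
  l2_a1 : forall x m, d (l2_01 x m) = l2_00 x (d m);
  l2_a2 : forall m x, d (l2_10 m x) = l2_00 (d m) x;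
  l2_a3 : forall m n, l2_01 (d m) n = l2_10 m (d n);
  l2_b1 : forall x y z,
     d (l3 x y z) = l2_00 x (l2_00 y z) - l2_00 (l2_00 x y) z - l2_00 y (l2_00 x z);
  l2_b2 : forall x y m,
     l3 x y (d m) = l2_01 x (l2_01 y m) - l2_01 (l2_00 x y) m - l2_01 y (l2_01 x m);
  l2_b3 : forall x m y,
     l3 x (d m) y = l2_01 x (l2_10 m y) - l2_10 (l2_01 x m) y - l2_10 m (l2_00 x y);
  l2_b4 : forall m x y,
     l3 (d m) x y = l2_10 m (l2_00 x y) - l2_10 (l2_10 m x) y - l2_01 x (l2_10 m y);
  l2_c : forall w x y z,
     l2_01 w (l3 x y z) - l2_01 x (l3 w y z) + l2_01 y (l3 w x z)
     + l2_10 (l3 w x y) z - l3 (l2_00 w x) y z - l3 x (l2_00 w y) z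
     - l3 x y (l2_00 w z) + l3 w (l2_00 x y) z + l3 w y (l2_00 x z)
     - l3 w x (l2_00 y z) = 0
}.
End Leibniz2.

Section Ker.
Variables (R : pzRingType) (V W : lmodType R) (rho : {linear V -> W}).

Definition kerP : pred V := fun e => `[< rho e = 0 >].

Lemma kerP_closed : subsemimod_closed kerP.
Proof.
split; [split|].
- by apply/asboolP; rewrite raddf0.
- move=> x y /asboolP Hx /asboolP Hy.
  by apply/asboolP; rewrite /= raddfD /= Hx Hy addr0.
- move=> c x /asboolP Hx.
  by apply/asboolP; rewrite /= linearZ /= Hx scaler0.
Qed.

HB.instance Definition _ := GRing.isSubmodClosed.Build R V kerP kerP_closed.
Definition kerT := {e : V | kerP e}.
HB.instance Definition _ := [isSub for (@sval V kerP : kerT -> V)].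
HB.instance Definition _ := [Choice of kerT by <:].
HB.instance Definition _ := [SubChoice_isSubLmodule of kerT by <:].

Definition kincl : kerT -> V := val.
End Ker.

(* Pre-Courant algebroids, algebraically: A plays the role of C^oo(M), *)
(* V the role of Gamma(E) (an A-module via act), vector fields are the  *)
(* R-linear derivations of A, acting on functions.                       *)
Section Courant.
Variables (R : realType) (A : comAlgType R) (V : lmodType R).

Definition is_derivation (X : A -> A) : Prop :=
  (forall (c : R) f g, X (c *: f + g) = c *: X f + X g) /\
  (forall f g, X (f * g) = X f * g + f * X g).

Definition vbracket (X Y : A -> A) : A -> A := fun f => X (Y f) - Y (X f).

Record module_action (act : A -> V -> V) : Prop := {
  act1 : forall x, act 1 x = x;
  actA : forall a b x, act (a * b) x = act a (act b x);
  actDl : forall a b x, act (a + b) x = act a x + act b x;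
  actDr : forall a x y, act a (x + y) = act a x + act a y;
  act_scal : forall (c : R) x, act (c%:A) x = c *: x
}.

Record courant_vector_bundle (act : A -> V -> V) (g : V -> V -> A)
    (rho : {linear V -> (A -> A)}) : Prop := {
  cvb_module : module_action act;
  g_sym : forall x y, g x y = g y x;
  g_Alin : forall a x x' y, g (act a x + x') y = a * g x y + g x' y;
  (* nondegenerate, and inducing the identification E^* = E *)
  g_nondeg : forall x, (forall y, g x y = 0) -> x = 0;
  g_riesz : forall phi : V -> A,
      (forall a x y, phi (act a x + y) = a * phi x + phi y) ->
      exists x, forall y, phi y = g x y;
  (* rho is a bundle map E -> TM *)
  rho_der : forall e, is_derivation (rho e);
  rho_Alin : forall a e f, rho (act a e) f = a * rho e f;
  (* rho o rho^* = 0, where <rho^*(df), e> = rho(e) f *)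
  rho_rhostar : forall f x, (forall e, g x e = rho e f) -> rho x = 0
}.

Record pre_courant (act : A -> V -> V) (g : V -> V -> A)
    (rho : {linear V -> (A -> A)}) (circ : V -> V -> V) : Prop := {
  pc_cvb : courant_vector_bundle act g rho;
  pc_bilin : bilin circ;
  pc_anchor : forall e1 e2, rho (circ e1 e2) = vbracket (rho e1) (rho e2);
  pc_sym : forall e1 e2,
      g (circ e1 e1) e2 = (2%:R^-1 : R) *: rho e2 (g e1 e1);
  pc_inv : forall e1 e2 e3,
      rho e1 (g e2 e3) = g (circ e1 e2) e3 + g e2 (circ e1 e3)
}.

Definition jacobiator (circ : V -> V -> V) (e1 e2 e3 : V) : V :=
  circ e1 (circ e2 e3) - circ (circ e1 e2) e3 - circ e2 (circ e1 e3).

(* The structure maps of the theorem. l2 with one argument in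
   Gamma(Ker rho) is e o kappa (resp. kappa o e), and l3 = J; they are
   read back into Gamma(Ker rho) with insubd (default 0 if the value is
   not in the kernel -- conditions (a1),(a2),(b1) of leibniz2 force the
   values to actually lie in the kernel). *)
Variables (rho : {linear V -> (A -> A)}) (circ : V -> V -> V).

Definition l2_EK (e : V) (k : kerT rho) : kerT rho :=
  insubd (0 : kerT rho) (circ e (kincl k)).
Definition l2_KE (k : kerT rho) (e : V) : kerT rho :=
  insubd (0 : kerT rho) (circ (kincl k) e).
Definition l3_J (e1 e2 e3 : V) : kerT rho :=
  insubd (0 : kerT rho) (jacobiator circ e1 e2 e3).
End Courant.

(* Main.v *)
Require Import Defs.
From HB Require Import structures.
From mathcomp Require Import all_boot all_order all_algebra.
From mathcomp Require Import boolp classical_sets functions reals.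
From mathcomp Require Import ring.
Import GRing.Theory.
Local Open Scope ring_scope.

(* abelian-group cancellation tactic on right-nested sums *)
Lemma pl0 (V : zmodType) (t z : V) : t + z = t + z. Proof. by []. Qed.
Lemma plS (V : zmodType) (t y z z' : V) : z = t + z' -> y + z = t + (y + z').
Proof. by move=> ->; rewrite addrCA. Qed.
Lemma plL (V : zmodType) (t : V) : t = t + 0. Proof. by rewrite addr0. Qed.
Lemma cancP (V : zmodType) (a r r' : V) : r = - a + r' -> r' = 0 -> a + r = 0.
Proof. by move=> -> ->; rewrite addr0 subrr. Qed.
Lemma cancN (V : zmodType) (a r r' : V) : r = a + r' -> r' = 0 -> - a + r = 0.
Proof. by move=> -> ->; rewrite addr0 addNr. Qed.

Ltac pull := repeat first [ apply pl0 | apply plL | eapply plS ].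
Ltac canc := repeat (first [ eapply cancN; [pull|] | eapply cancP; [pull|] ]); try reflexivity.

Lemma test (V : zmodType) (a b c : V) : a + (b + (- a + (c + (- c + - b)))) = 0.
Proof. canc. Qed.

Section Rules.
Variables (R : realType) (V : lmodType R) (circ : V -> V -> V).
Hypothesis Hb : bilin circ.
Lemma cDr a b c : circ a (b + c) = circ a b + circ a c.
Proof. by case: Hb => Hr _; move: (Hr a 1 b c); rewrite !scale1r. Qed.
Lemma cDl a b c : circ (a + b) c = circ a c + circ b c.
Proof. by case: Hb => _ Hl; move: (Hl c 1 a b); rewrite !scale1r. Qed.
Lemma c0r a : circ a 0 = 0.
Proof. by apply: (addrI (circ a 0)); rewrite -cDr !addr0. Qed.
Lemma c0l a : circ 0 a = 0.
Proof. by apply: (addrI (circ 0 a)); rewrite -cDl !addr0. Qed.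
Lemma cZr a (c : R) b : circ a (c *: b) = c *: circ a b.
Proof. by case: Hb => Hr _; move: (Hr a c b 0); rewrite !addr0 c0r addr0. Qed.
Lemma cZl a (c : R) b : circ (c *: a) b = c *: circ a b.
Proof. by case: Hb => _ Hl; move: (Hl b c a 0); rewrite !addr0 c0l addr0. Qed.
Lemma cNr a b : circ a (- b) = - circ a b.
Proof. by rewrite -scaleN1r cZr scaleN1r. Qed.
Lemma cNl a b : circ (- a) b = - circ a b.
Proof. by rewrite -scaleN1r cZl scaleN1r. Qed.
End Rules.
Arguments cDr {R V circ}. Arguments cDl {R V circ}. Arguments c0r {R V circ}. Arguments c0l {R V circ}.
Arguments cZr {R V circ}. Arguments cZl {R V circ}. Arguments cNr {R V circ}. Arguments cNl {R V circ}.

Lemma ctest (R : realType) (V : lmodType R) (circ : V -> V -> V) :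
  bilin circ -> forall w x y z : V,
  circ w (jacobiator circ x y z) - circ x (jacobiator circ w y z)
  + circ y (jacobiator circ w x z) + circ (jacobiator circ w x y) z
  - jacobiator circ (circ w x) y z - jacobiator circ x (circ w y) z
  - jacobiator circ x y (circ w z) + jacobiator circ w (circ x y) z
  + jacobiator circ w y (circ x z) - jacobiator circ w x (circ y z) = 0.
Proof.
move=> Hb.
move=> w x y z; rewrite /jacobiator.
rewrite !(cDr Hb, cDl Hb, cNr Hb, cNl Hb) !opprD !opprK -!addrA.
canc.
Qed.

Theorem theorem4p1 (R : realType) (A : comAlgType R) (V : lmodType R)
    (act : A -> V -> V) (g : V -> V -> A) (rho : {linear V -> (A -> A)})
    (circ : V -> V -> V) :
  pre_courant act g rho circ ->
  leibniz2 (@kincl R V (A -> A) rho) circ (@l2_EK R A V rho circ)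
    (@l2_KE R A V rho circ) (@l3_J R A V rho circ).
Proof.
move=> P.
have Hder := rho_der (pc_cvb P).
have X0 e : rho e 0 = 0.
  have [Hl _] := Hder e.
  by apply: (addrI (rho e 0)); move: (Hl 1 0 0); rewrite !scale1r !addr0 => <-.
have XN e (h : A) : rho e (- h) = - rho e h.
  have [Hl _] := Hder e.
  by move: (Hl (-1) h 0); rewrite !addr0 !scaleN1r X0 addr0.
have Xadd e (f h : A) : rho e (f - h) = rho e f - rho e h.
  have [Hl _] := Hder e.
  by move: (Hl 1 f (- h)); rewrite !scale1r XN.
have kEK e (k : kerT rho) : rho (circ e (val k)) = 0.
  rewrite (pc_anchor P); have /asboolP Hk := valP k.
  apply/funext => f; rewrite /vbracket Hk /=.
  by rewrite -[0 f]/(0:A) -[0 (rho e f)]/(0:A) X0 subrr.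
have kKE e (k : kerT rho) : rho (circ (val k) e) = 0.
  rewrite (pc_anchor P); have /asboolP Hk := valP k.
  apply/funext => f; rewrite /vbracket Hk /=.
  by rewrite -[0 f]/(0:A) -[0 (rho e f)]/(0:A) X0 subrr.
have kJ x y z : rho (jacobiator circ x y z) = 0.
  rewrite /jacobiator !raddfB /= !(pc_anchor P).
  apply/funext => f; rewrite /vbracket /=.
  have sub_f (F G : A -> A) : (F - G) f = F f - G f by [].
  rewrite -[0 f]/(0:A) !sub_f !Xadd; ring.
have Hb := pc_bilin P.
have valZ c (k : kerT rho) : val (c *: k) = c *: val k by [].
have valD (k k' : kerT rho) : val (k + k') = val k + val k' by [].
have valB (k k' : kerT rho) : val (k - k') = val k - val k' by [].
have valN (k : kerT rho) : val (- k) = - val k by [].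
have val0 : val (0 : kerT rho) = 0 by [].
have E (k k' : kerT rho) c : val (c *: k + k') = c *: val k + val k' by [].
have vEK e (k : kerT rho) : val (@l2_EK R A V rho circ e k) = circ e (val k).
  rewrite /l2_EK insubdK //; apply/asboolP; exact (kEK e k).
have vKE (k : kerT rho) e : val (@l2_KE R A V rho circ k e) = circ (val k) e.
  by rewrite /l2_KE insubdK //; apply/asboolP; exact: (kKE e k).
have vJ x y z : val (@l3_J R A V rho circ x y z) = jacobiator circ x y z.
  by rewrite /l3_J insubdK //; apply/asboolP; exact: (kJ x y z).
have Jlin1 x y z (c : R) z' : jacobiator circ x y (c *: z + z') = c *: jacobiator circ x y z + jacobiator circ x y z'.
  apply/subr0_eq; rewrite /jacobiator !(cDr Hb, cDl Hb, cNr Hb, cNl Hb, cZr Hb, cZl Hb).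
  rewrite !scalerDr !scalerN !opprD !opprK -!addrA; canc.
have Jlin2 x y z (c : R) y' : jacobiator circ x (c *: y + y') z = c *: jacobiator circ x y z + jacobiator circ x y' z.
  apply/subr0_eq; rewrite /jacobiator !(cDr Hb, cDl Hb, cNr Hb, cNl Hb, cZr Hb, cZl Hb).
  rewrite !scalerDr !scalerN !opprD !opprK -!addrA; canc.
have Jlin3 x y z (c : R) x' : jacobiator circ (c *: x + x') y z = c *: jacobiator circ x y z + jacobiator circ x' y z.
  apply/subr0_eq; rewrite /jacobiator !(cDr Hb, cDl Hb, cNr Hb, cNl Hb, cZr Hb, cZl Hb).
  rewrite !scalerDr !scalerN !opprD !opprK -!addrA; canc.
split.
- by move=> c u v; rewrite /kincl raddfD.
- exact: Hb.
- split=> [x c u v | y c u v]; apply: val_inj;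
    apply: etrans _ (esym (E _ _ _)); rewrite !vEK.
  + by rewrite -(cZr Hb) -(cDr Hb).
  + by rewrite -(cZl Hb) -(cDl Hb).
- split=> [x c u v | y c u v]; apply: val_inj;
    apply: etrans _ (esym (E _ _ _)); rewrite !vKE.
  + by rewrite -(cZr Hb) -(cDr Hb).
  + by rewrite -(cZl Hb) -(cDl Hb).
- split=> [x y c u v | x z c u v | y z c u v]; apply: val_inj;
    apply: etrans _ (esym (E _ _ _)); rewrite !vJ.
  + exact: Jlin1.
  + exact: Jlin2.
  + exact: Jlin3.
- by move=> x m; rewrite /kincl vEK.
- by move=> m x; rewrite /kincl vKE.
- by move=> m n; apply: val_inj; apply: etrans (vEK _ _) (esym (vKE _ _)).
- by move=> x y z; rewrite /kincl vJ.
- by move=> x y m; apply: val_inj; rewrite /kincl !valB vJ !vEK.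
- by move=> x m y; apply: val_inj; rewrite /kincl !valB vJ !vEK !vKE vEK.
- by move=> m x y; apply: val_inj; rewrite /kincl !valB vJ !(vEK, vKE).
- move=> w x y z; apply: val_inj.
  rewrite !(valD, valB) val0 !vEK !vKE !vJ.
  rewrite !valN !(vEK, vKE, vJ).
  exact: ctest.
Qed.
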